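(* Let $\{A,T',U',R,Q\}$ be a data set for the relaxed commutant lifting problem such that $A$ is a strict contraction ($\|A\|<1$) and $R$ is left invertible. Then there exists a unique contractive interpolant for $\{A,T',U',R,Q\}$ if and only if $\overline{Q\mathcal{H}_0}=\mathcal{H}$ or $T'$ is an isometry.
   Context: For a subspace $\mathcal{V}$ of a Hilbert space $\mathcal{W}$, $\Pi_{\mathcal{V}}$ denotes the orthogonal projection of $\mathcal{W}$ onto $\mathcal{V}$. A data set $\{A,T',U',R,Q\}$ consists of: a contraction $A:\mathcal{H}\to\mathcal{H}'$; a contraction $T'$ on $\mathcal{H}'$; a minimal isometric lifting $U'$ of $T'$, i.e. an isometry $U'$ on a Hilbert space $\mathcal{K}'\supseteq\mathcal{H}'$ such that $\mathcal{H}'$ is cyclic for $U'$ and $\Pi_{\mathcal{H}'}U'=T'\Pi_{\mathcal{H}'}$; and operators $R,Q:\mathcal{H}_0\to\mathcal{H}$ with $T'AR=AQ$ and $R^*R\le Q^*Q$. A contractive interpolant is a contraction $B:\mathcal{H}\to\mathcal{K}'$ with $\Pi_{\mathcal{H}'}B=A$ and $U'BR=BQ$. An operator $C$ is left invertible if $DC=I$ for some bounded operator $D$. *)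

(* Defs.v *)
From HB Require Import structures.
From mathcomp Require Import all_boot all_order all_algebra.
From mathcomp Require Import reals.
From mathcomp Require Import complex.
Set Implicit Arguments. Unset Strict Implicit. Unset Printing Implicit Defensive.
Import Order.TTheory GRing.Theory Num.Theory.
Local Open Scope ring_scope.

Section HilbertDefs.
Variable F : realType.
Local Notation C := (F[i]).

Definition inner_product_axioms (V : lmodType C) (ip : V -> V -> C) : Prop :=
  [/\ forall (a : C) (x y z : V), ip (a *: x + y) z = a * ip x z + ip y z,
      forall x y : V, ip y x = conjc (ip x y),
      forall x : V, complex.Im (ip x x) = 0 /\ 0 <= complex.Re (ip x x)
    & forall x : V, ip x x = 0 -> x = 0].

Definition ip_norm (V : lmodType C) (ip : V -> V -> C) (x : V) : F :=
  Num.sqrt (complex.Re (ip x x)).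

Definition ip_complete (V : lmodType C) (ip : V -> V -> C) : Prop :=
  forall u : nat -> V,
    (forall e : F, 0 < e -> exists N, forall m n, (N <= m)%N -> (N <= n)%N ->
       ip_norm ip (u m - u n) < e) ->
    exists l : V, forall e : F, 0 < e -> exists N, forall n, (N <= n)%N ->
       ip_norm ip (u n - l) < e.

Record hilbertSpace := HilbertSpace {
  hs_sort :> lmodType C;
  hs_ip : hs_sort -> hs_sort -> C;
  hs_ip_axioms : inner_product_axioms hs_ip;
  hs_complete : ip_complete hs_ip }.

Definition hnorm (V : hilbertSpace) (x : V) : F := ip_norm (@hs_ip V) x.
Definition hip (V : hilbertSpace) (x y : V) : C := @hs_ip V x y.

Section Ops.
Variables V W : hilbertSpace.

Definition is_linear (T : V -> W) : Prop :=
  forall (a : C) (x y : V), T (a *: x + y) = a *: T x + T y.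

Definition bounded_op (T : V -> W) : Prop :=
  is_linear T /\ exists c : F, forall x, hnorm (T x) <= c * hnorm x.

Definition contraction (T : V -> W) : Prop :=
  bounded_op T /\ forall x, hnorm (T x) <= hnorm x.

Definition strict_contraction (T : V -> W) : Prop :=
  bounded_op T /\ exists c : F, c < 1 /\ forall x, hnorm (T x) <= c * hnorm x.

Definition isometry (T : V -> W) : Prop :=
  bounded_op T /\ forall x, hnorm (T x) = hnorm x.

End Ops.

Definition left_invertible (V W : hilbertSpace) (T : V -> W) : Prop :=
  exists D : W -> V, bounded_op D /\ forall x, D (T x) = x.

Section Sets.
Variable V : hilbertSpace.

Definition hclosure (X : V -> Prop) : V -> Prop :=
  fun v => forall e : F, 0 < e -> exists x, X x /\ hnorm (v - x) < e.

Definition lin_span (X : V -> Prop) : V -> Prop :=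
  fun v => exists (n : nat) (a : 'I_n -> C) (w : 'I_n -> V),
    (forall i, X (w i)) /\ v = \sum_(i < n) a i *: w i.

Definition closed_set (X : V -> Prop) : Prop :=
  forall v, hclosure X v -> X v.

Definition closed_subspace (X : V -> Prop) : Prop :=
  [/\ X 0, (forall (a : C) x y, X x -> X y -> X (a *: x + y)) & closed_set X].

Definition orth_proj (X : V -> Prop) (P : V -> V) : Prop :=
  forall v, X (P v) /\ forall x, X x -> hip (v - P v) x = 0.
End Sets.

(* A contraction T' on the closed subspace H' (given by a map on K' leaving H' invariant) *)
Definition contraction_on (K : hilbertSpace) (H' : K -> Prop) (T : K -> K) : Prop :=
  [/\ forall x, H' x -> H' (T x),
      (forall (a : C) x y, H' x -> H' y -> T (a *: x + y) = a *: T x + T y)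
    & forall x, H' x -> hnorm (T x) <= hnorm x].

Definition isometry_on (K : hilbertSpace) (H' : K -> Prop) (T : K -> K) : Prop :=
  forall x, H' x -> hnorm (T x) = hnorm x.

Definition minimal_isometric_lifting (K : hilbertSpace) (H' : K -> Prop)
    (P : K -> K) (T U : K -> K) : Prop :=
  [/\ isometry U,
      (forall k, P (U k) = T (P k))
    & forall k, hclosure (lin_span (fun y => exists n h, H' h /\ y = iter n U h)) k].

(* R^* R <= Q^* Q, i.e. <R^*R x, x> <= <Q^*Q x, x>, i.e. ||R x||^2 <= ||Q x||^2 *)
Definition op_le_sq (V W : hilbertSpace) (R Q : V -> W) : Prop :=
  forall x, hnorm (R x) <= hnorm (Q x).

Definition contractive_interpolant (H0 H K : hilbertSpace) (P : K -> K)
    (A : H -> K) (U : K -> K) (R Q : H0 -> H) (B : H -> K) : Prop :=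
  [/\ contraction B, (forall h, P (B h) = A h) & (forall x, U (B (R x)) = B (Q x))].

End HilbertDefs.

(* Main.v *)
Require Import Defs.
From HB Require Import structures.
From mathcomp Require Import all_boot all_order all_algebra.
From mathcomp Require Import reals.
From mathcomp Require Import complex.
Import Order.TTheory GRing.Theory Num.Theory.
Local Open Scope ring_scope.
From mathcomp Require Import ring lra.
From mathcomp Require Import boolp classical_sets.
Local Open Scope ring_scope.
Set Implicit Arguments. Unset Strict Implicit. Unset Printing Implicit Defensive.
Section Cx.
Variable F : realType.
Local Notation C := (F[i]).
Local Notation Re := (@complex.Re F).
Local Notation Im := (@complex.Im F).
Definition nc (a : C) : F := Re a ^+ 2 + Im a ^+ 2.
Lemma mul_conj (a : C) : a * conjc a = ((nc a)%:C)%C.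
Proof. case: a => x y; rewrite /nc /=; simpc; apply/eqP; rewrite eq_complex /=.
by apply/andP; split; apply/eqP; ring. Qed.
Lemma ReD (a b : C) : Re (a + b) = Re a + Re b. Proof. by case: a; case: b. Qed.
Lemma ImD (a b : C) : Im (a + b) = Im a + Im b. Proof. by case: a; case: b. Qed.
Lemma ReN (a : C) : Re (- a) = - Re a. Proof. by case: a. Qed.
Lemma ImN (a : C) : Im (- a) = - Im a. Proof. by case: a. Qed.
Lemma ReM (a b : C) : Re (a * b) = Re a * Re b - Im a * Im b.
Proof. by case: a; case: b. Qed.
Lemma ImM (a b : C) : Im (a * b) = Re a * Im b + Im a * Re b.
Proof. case: a => ? ?; case: b => ? ? /=; ring. Qed.
Lemma Re_conj (a : C) : Re (conjc a) = Re a. Proof. by case: a. Qed.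
Lemma Im_conj (a : C) : Im (conjc a) = - Im a. Proof. by case: a. Qed.
Lemma ReR (x : F) : Re (x%:C)%C = x. Proof. by []. Qed.
Lemma ImR (x : F) : Im (x%:C)%C = 0. Proof. by []. Qed.
Lemma nc_ge0 a : 0 <= nc a. Proof. by rewrite /nc addr_ge0 // sqr_ge0. Qed.
Lemma nc_eq0 a : nc a = 0 -> a = 0.
Proof. case: a => x y; rewrite /nc /= => h.
have hx : x = 0 by apply/eqP; rewrite -sqrf_eq0; apply/eqP; nra.
have hy : y = 0 by apply/eqP; rewrite -sqrf_eq0; apply/eqP; nra.
by rewrite hx hy. Qed.
Lemma nc0 : nc 0 = 0. Proof. by rewrite /nc /= expr0n /= addr0. Qed.
Lemma ncR (x : F) : nc (x%:C)%C = x ^+ 2. Proof. by rewrite /nc /= expr0n /= addr0. Qed.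
Lemma ncM a b : nc (a * b) = nc a * nc b.
Proof. rewrite /nc ReM ImM; ring. Qed.
Lemma ncN a : nc (- a) = nc a. Proof. by rewrite /nc ReN ImN !sqrrN. Qed.
Lemma conj_conj (a : C) : conjc (conjc a) = a. Proof. by case: a => ? ? /=; rewrite opprK. Qed.
Lemma c_eq (a b : C) : Re a = Re b -> Im a = Im b -> a = b.
Proof. by case: a; case: b => ? ? ? ? /= -> ->. Qed.
Lemma conjD (a b : C) : conjc (a + b) = conjc a + conjc b.
Proof. case: a => ? ?; case: b => ? ?; apply: c_eq => /=; ring. Qed.
Lemma conjM (a b : C) : conjc (a * b) = conjc a * conjc b.
Proof. case: a => ? ?; case: b => ? ?; apply: c_eq => /=; ring. Qed.
Lemma conjN (a : C) : conjc (- a) = - conjc a.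
Proof. case: a => ? ?; apply: c_eq => /=; ring. Qed.
Lemma conj0 : conjc (0 : C) = 0. Proof. by apply: c_eq => /=; rewrite ?oppr0. Qed.
Lemma conjR (x : F) : conjc (x%:C)%C = (x%:C)%C. Proof. by apply: c_eq => /=; rewrite ?oppr0. Qed.
Lemma conj_nc a : nc (conjc a) = nc a. Proof. by rewrite /nc Re_conj Im_conj sqrrN. Qed.
Lemma Re_le_nc a : Re a ^+ 2 <= nc a. Proof. rewrite /nc; have := sqr_ge0 (Im a); lra. Qed.
End Cx.

Section IP.
Variable F : realType.
Local Notation C := (F[i]).
Local Notation Re := (@complex.Re F).
Local Notation Im := (@complex.Im F).
Variables (V : lmodType C) (ip : V -> V -> C).
Hypothesis Hax : inner_product_axioms ip.

Lemma ip_lin a x y z : ip (a *: x + y) z = a * ip x z + ip y z.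
Proof. by case: Hax. Qed.
Lemma ip_sym x y : ip y x = conjc (ip x y).
Proof. by case: Hax. Qed.
Lemma ip_pos x : Im (ip x x) = 0 /\ 0 <= Re (ip x x).
Proof. by case: Hax. Qed.
Lemma ip_def x : ip x x = 0 -> x = 0.
Proof. by case: Hax => _ _ _; apply. Qed.

Lemma ip0l z : ip 0 z = 0.
Proof. have := ip_lin 1 0 0 z; rewrite scaler0 addr0 mul1r => h.
have: ip 0 z + ip 0 z - ip 0 z = ip 0 z - ip 0 z by rewrite -h.
by rewrite addrK subrr. Qed.
Lemma ipDl x y z : ip (x + y) z = ip x z + ip y z.
Proof. by have := ip_lin 1 x y z; rewrite scale1r mul1r. Qed.
Lemma ipZl a x z : ip (a *: x) z = a * ip x z.
Proof. by have := ip_lin a x 0 z; rewrite !addr0 ip0l addr0. Qed.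
Lemma ipNl x z : ip (- x) z = - ip x z.
Proof. by rewrite -scaleN1r ipZl mulN1r. Qed.
Lemma ipBl x y z : ip (x - y) z = ip x z - ip y z.
Proof. by rewrite ipDl ipNl. Qed.
Lemma ip0r z : ip z 0 = 0.
Proof. by rewrite ip_sym ip0l conj0. Qed.
Lemma ipDr z x y : ip z (x + y) = ip z x + ip z y.
Proof. by rewrite ip_sym ipDl conjD -!ip_sym. Qed.
Lemma ipZr z a x : ip z (a *: x) = conjc a * ip z x.
Proof. by rewrite ip_sym ipZl conjM -ip_sym. Qed.
Lemma ipNr z x : ip z (- x) = - ip z x.
Proof. by rewrite ip_sym ipNl conjN -ip_sym. Qed.
Lemma ipBr z x y : ip z (x - y) = ip z x - ip z y.
Proof. by rewrite ipDr ipNr. Qed.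
Lemma ip_suml I (r : seq I) (P : pred I) (f : I -> V) z :
  ip (\sum_(i <- r | P i) f i) z = \sum_(i <- r | P i) ip (f i) z.
Proof. by elim/big_rec2: _ => [|i a b _ <-]; rewrite ?ip0l ?ipDl. Qed.
Lemma ip_sumr I (r : seq I) (P : pred I) (f : I -> V) z :
  ip z (\sum_(i <- r | P i) f i) = \sum_(i <- r | P i) ip z (f i).
Proof. by elim/big_rec2: _ => [|i a b _ <-]; rewrite ?ip0r ?ipDr. Qed.

Definition n2 x := Re (ip x x).
Lemma ipxx x : ip x x = ((n2 x)%:C)%C.
Proof. rewrite /n2; case: (ip_pos x); case: (ip x x) => a b /= -> _; by []. Qed.
Lemma n2_ge0 x : 0 <= n2 x. Proof. by case: (ip_pos x). Qed.
Lemma n2_eq0 x : n2 x = 0 -> x = 0.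
Proof. by move=> h; apply: ip_def; rewrite ipxx h. Qed.
Lemma n20 : n2 0 = 0. Proof. by rewrite /n2 ip0l. Qed.
Lemma Re_sym x y : Re (ip y x) = Re (ip x y). Proof. by rewrite ip_sym Re_conj. Qed.
Lemma n2D x y : n2 (x + y) = n2 x + n2 y + 2 * Re (ip x y).
Proof. rewrite /n2 ipDl !ipDr !ReD (Re_sym y x); ring. Qed.
Lemma n2N x : n2 (- x) = n2 x.
Proof. by rewrite /n2 ipNl ipNr opprK. Qed.
Lemma n2B x y : n2 (x - y) = n2 x + n2 y - 2 * Re (ip x y).
Proof. rewrite n2D n2N ipNr ReN; ring. Qed.
Lemma n2Z a x : n2 (a *: x) = nc a * n2 x.
Proof. by rewrite /n2 ipZl ipZr mulrA mul_conj ipxx ReM /= mul0r subr0. Qed.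
Lemma n2_sym x y : n2 (x - y) = n2 (y - x).
Proof. by rewrite -n2N opprB. Qed.

Lemma re_ineq (t : F) x y : 2 * t * Re (ip x y) <= t ^+ 2 * n2 x + n2 y.
Proof. have := n2_ge0 ((t%:C)%C *: x - y); rewrite n2B n2Z ipZl ncR ReM /=; lra. Qed.

Lemma n2D_le (t : F) x y : 0 < t -> n2 (x + y) <= (1 + t) * n2 x + (1 + t^-1) * n2 y.
Proof. move=> t0; have := re_ineq t x y; rewrite n2D => h.
have tu : t * t^-1 = 1 by rewrite mulfV // gt_eqF.
have u0 : 0 < t^-1 by rewrite invr_gt0.
have hy := n2_ge0 y; have hx := n2_ge0 x.
set a := n2 x in h hx *; set b := n2 y in h hy *; set R := Re _ in h *.
set u := t^-1 in tu u0 *.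
have : 2 * R <= t * a + u * b.
  rewrite -(ler_pM2l t0).
  have -> : t * (t * a + u * b) = t^+2 * a + b by rewrite mulrDr !mulrA tu mul1r expr2.
  lra.
lra. Qed.

Lemma n2D_le2 x y : n2 (x + y) <= 2 * n2 x + 2 * n2 y.
Proof. by have := n2D_le x y ltr01; rewrite invr1. Qed.

Lemma cs x y : nc (ip x y) <= n2 x * n2 y.
Proof.
have [y0|yn0] := eqVneq y 0; first by rewrite y0 ip0r nc0 n20 mulr0.
have ap : 0 < n2 y.
  by rewrite lt_def n2_ge0 andbT; apply/eqP => /n2_eq0 /eqP; rewrite (negbTE yn0).
have := n2_ge0 (((n2 y)%:C)%C *: x - ip x y *: y).
rewrite n2B !n2Z ipZl ipZr ncR (mulrC (conjc _)) mul_conj ReM /= mul0r subr0 => h.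
have : 0 <= n2 y * (n2 y * n2 x - nc (ip x y)) by rewrite mulrBr; lra.
rewrite pmulr_rge0 // subr_ge0 mulrC; done. Qed.

Lemma Re_ip_i x y : Re (ip x ('i%C *: y)) = Im (ip x y).
Proof. rewrite ipZr ReM /=; lra. Qed.
Lemma ip_eq0 x y : Re (ip x y) = 0 -> Re (ip x ('i%C *: y)) = 0 -> ip x y = 0.
Proof. rewrite Re_ip_i => h1 h2; by apply: c_eq; [exact: h1 | exact: h2]. Qed.

End IP.

Lemma subsub (Z : zmodType) (v u l : Z) : v - u - (v - l) = l - u.
Proof. by rewrite opprB addrC addrA addrNK. Qed.

Section Real.
Variable F : realType.
Lemma le_eps (x y k : F) : 0 < k -> (forall d, 0 < d -> x <= y + k * d) -> x <= y.
Proof. move=> k0 h; apply/ler_addgt0Pr => e e0.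
have := h (e / k); rewrite (mulrC k) divfK ?gt_eqF //; apply; exact: divr_gt0. Qed.

Lemma small_inv (e : F) : 0 < e -> exists N : nat, forall n, (N <= n)%N -> (n.+1%:R)^-1 < e.
Proof. move=> e0; have ei : 0 < e^-1 by rewrite invr_gt0.
have hb := Num.Theory.archi_boundP (ltW ei).
exists (Num.bound e^-1) => n hn.
rewrite -(invrK e) ltf_pV2 ?posrE ?invr_gt0 // ?ltr0Sn //.
apply: lt_le_trans hb _; rewrite ler_nat; exact: leqW. Qed.

Lemma incr_cauchy (s : nat -> F) (b : F) :
  (forall n, s n <= s n.+1) -> (forall n, s n <= b) ->
  forall e, 0 < e -> exists N, forall m, (N <= m)%N -> s m - s N < e.
Proof.
move=> inc bd e e0.
have mono : forall m n, (m <= n)%N -> s m <= s n.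
  move=> m n /subnK <-; elim: (n - m)%N => [|k IH] //; rewrite addSn.
  exact: le_trans IH (inc _).
pose E := fun x : F => exists n, x = s n.
have hs : has_sup E by split; [exists (s 0%N); exists 0%N | exists b => x [n ->]].
have [x [N ->] hN] := sup_adherent e0 hs.
exists N => m hm; have : s m <= sup E by apply: sup_upper_bound => //; exists m.
lra. Qed.
End Real.

Lemma sum_split (Z : zmodType) (f : nat -> Z) n m : (n <= m)%N ->
  \sum_(i < m) f i = \sum_(i < n) f i + \sum_(n <= i < m) f i.
Proof. by move=> hm; rewrite -!(big_mkord xpredT) (big_cat_nat (leq0n n) hm). Qed.

Section Lim.
Variable F : realType.
Local Notation C := (F[i]).
Local Notation Re := (@complex.Re F).
Local Notation Im := (@complex.Im F).
Variables (V : lmodType C) (ip : V -> V -> C).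
Hypothesis Hax : inner_product_axioms ip.
Local Notation n2 := (n2 ip).

Definition cvg (u : nat -> V) l := forall e, 0 < e -> exists N, forall n, (N <= n)%N -> n2 (u n - l) < e.
Definition cauchy (u : nat -> V) := forall e, 0 < e -> exists N, forall m n, (N <= m)%N -> (N <= n)%N -> n2 (u m - u n) < e.

Lemma n2_sqrt_lt x e : 0 < e -> (Num.sqrt (n2 x) < e) = (n2 x < e ^+ 2).
Proof. move=> e0; have e2 : 0 < e ^+ 2 by rewrite exprn_gt0.
by rewrite -(ltr_sqrt (n2 x) e2) sqrtr_sqr gtr0_norm. Qed.

Lemma complete (Hc : ip_complete ip) u : cauchy u -> exists l, cvg u l.
Proof.
move=> cu; have [l hl] : exists l : V, forall e : F, 0 < e -> exists N, forall n, (N <= n)%N ->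
       ip_norm ip (u n - l) < e.
  apply: Hc => e e0; have [N hN] := cu (e ^+ 2) (exprn_gt0 _ e0).
  by exists N => m n hm hn; rewrite /ip_norm -/(n2 _) n2_sqrt_lt // hN.
exists l => e e0; have se : 0 < Num.sqrt e by rewrite sqrtr_gt0.
have [N hN] := hl (Num.sqrt e) se.
exists N => n hn; have := hN n hn; rewrite /ip_norm -/(n2 _) ltr_sqrt //.
Qed.

Lemma cvg_unique u l1 l2 : cvg u l1 -> cvg u l2 -> l1 = l2.
Proof.
move=> h1 h2; apply/eqP; rewrite -subr_eq0; apply/eqP; apply: (n2_eq0 Hax).
apply/eqP; rewrite eq_le n2_ge0 // andbT; apply/ler_addgt0Pr => e e0.
have e4 : 0 < e / 4 by rewrite divr_gt0.
have [N1 hN1] := h1 _ e4; have [N2 hN2] := h2 _ e4.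
have a := hN1 (maxn N1 N2) (leq_maxl _ _); have b := hN2 (maxn N1 N2) (leq_maxr _ _).
have := n2D_le2 Hax (l1 - u (maxn N1 N2)) (u (maxn N1 N2) - l2).
rewrite addrA subrK n2_sym // => h; lra. Qed.

Lemma cvg_lin a u v l m : cvg u l -> cvg v m ->
  cvg (fun n => a *: u n + v n) (a *: l + m).
Proof.
move=> hu hv e e0; have k0 : 0 < 4 * (nc a + 1) by have := nc_ge0 a; lra.
have [N1 hN1] := hu (e / (4 * (nc a + 1))) (divr_gt0 e0 k0).
have [N2 hN2] := hv (e / 4) (divr_gt0 e0 (ltr0Sn _ 3)).
exists (maxn N1 N2) => n hn.
have h1 := hN1 n (leq_trans (leq_maxl _ _) hn); have h2 := hN2 n (leq_trans (leq_maxr _ _) hn).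
have -> : a *: u n + v n - (a *: l + m) = a *: (u n - l) + (v n - m).
  by rewrite scalerBr opprD !addrA; congr (_ + _); rewrite -!addrA; congr (_ + _); rewrite addrC.
apply: le_lt_trans (n2D_le2 Hax _ _) _; rewrite n2Z //.
have hna := nc_ge0 a; have hn1 := n2_ge0 Hax (u n - l).
have : nc a * n2 (u n - l) <= (nc a + 1) * (e / (4 * (nc a + 1))).
  apply: ler_pM; lra.
have -> : (nc a + 1) * (e / (4 * (nc a + 1))) = e / 4.
  by field; rewrite gt_eqF //; lra.
lra. Qed.

Lemma cvg_const l : cvg (fun _ => l) l.
Proof. by move=> e e0; exists 0%N => n _; rewrite subrr n20. Qed.

Lemma cvg_le u l b : cvg u l -> (exists N, forall n, (N <= n)%N -> n2 (u n) <= b) -> n2 l <= b.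
Proof.
move=> hu [N hN].
have b0 : 0 <= b by apply: le_trans (hN N (leqnn _)); exact: n2_ge0.
apply: (le_eps (k := b + 1)); first lra.
move=> t t0; apply: (le_eps (k := 1 + t^-1)).
  have : 0 < t^-1 by rewrite invr_gt0. lra.
move=> d d0; have [M hM] := hu d d0.
set K := maxn N M.
have h3 := n2D_le Hax (u K) (l - u K) t0; rewrite addrC subrK in h3.
have h2 := hN _ (leq_maxl N M : (N <= K)%N).
have h1 := hM _ (leq_maxr N M : (M <= K)%N); rewrite n2_sym // in h1.
have ti : 0 < t^-1 by rewrite invr_gt0.
apply: le_trans h3 _.
have hh : (1 + t^-1) * n2 (l - u K) <= (1 + t^-1) * d.
  by apply: ler_wpM2l; lra.
have : (1 + t) * n2 (u K) <= (1 + t) * b by apply: ler_wpM2l; lra.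
nra. Qed.

Lemma cvg_ip0 u l z : cvg u l -> (forall n, ip (u n) z = 0) -> ip l z = 0.
Proof.
move=> hu h0; apply: nc_eq0; apply/eqP; rewrite eq_le nc_ge0 andbT.
apply: (le_eps (k := n2 z + 1)); first by have := n2_ge0 Hax z; lra.
move=> d d0; have [N hN] := hu d d0.
have : ip l z = ip (l - u N) z by rewrite ipBl // h0 subr0.
move=> ->; apply: le_trans (cs Hax _ _) _; rewrite n2_sym //.
have := hN N (leqnn _); have := n2_ge0 Hax (u N - l); have := n2_ge0 Hax z; nra. Qed.

Lemma n2_sum_orth (t : nat -> V) (r : seq nat) : uniq r ->
  (forall i j, i != j -> ip (t i) (t j) = 0) ->
  n2 (\sum_(i <- r) t i) = \sum_(i <- r) n2 (t i).
Proof.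
move=> + orth; elim: r => [|a r IH] /=; first by rewrite !big_nil n20.
case/andP=> anr ur; rewrite !big_cons n2D // IH //.
have -> : ip (t a) (\sum_(i <- r) t i) = 0.
  rewrite ip_sumr // big_seq big1 // => i ir.
  by apply: orth; apply: contraNneq anr => ->.
by rewrite /= mulr0 addr0. Qed.

Lemma series_cauchy (t : nat -> V) b :
  (forall i j, i != j -> ip (t i) (t j) = 0) ->
  (forall N, \sum_(i < N) n2 (t i) <= b) ->
  cauchy (fun N => \sum_(i < N) t i).
Proof.
move=> orth bd e e0.
have inc : forall n, \sum_(i < n) n2 (t i) <= \sum_(i < n.+1) n2 (t i).
  by move=> n; rewrite big_ord_recr /= lerDl n2_ge0.
have [N hN] := incr_cauchy inc bd e0.
have key : forall m n, (N <= n)%N -> (n <= m)%N -> n2 (\sum_(i < m) t i - \sum_(i < n) t i) < e.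
  move=> m n hn hm.
  rewrite -!(big_mkord xpredT) (big_cat_nat (leq0n n) hm) /=.
  have -> : forall a1 b1 : V, a1 + b1 - a1 = b1 by move=> a1 b1; rewrite addrC addKr.
  rewrite n2_sum_orth ?iota_uniq //.
  have := hN m (leq_trans hn hm); have := hN n hn.
  have h0 : 0 <= \sum_(N <= i < n) n2 (t i) by apply: sumr_ge0 => i _; exact: n2_ge0.
  rewrite /= (sum_split (fun i => n2 (t i)) hm) (sum_split (fun i => n2 (t i)) hn); lra.
exists N => m n hm hn; case: (leqP n m) => hnm; first exact: key.
by rewrite n2_sym //; apply: key => //; exact: ltnW. Qed.

End Lim.

Section Proj.
Variable F : realType.
Local Notation C := (F[i]).
Local Notation Re := (@complex.Re F).
Local Notation Im := (@complex.Im F).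
Variables (V : lmodType C) (ip : V -> V -> C).
Hypothesis Hax : inner_product_axioms ip.
Hypothesis Hc : ip_complete ip.
Local Notation n2 := (n2 ip).
Local Notation cvg := (cvg ip).

Lemma cvg_sub u l v : cvg u l -> cvg (fun n => v - u n) (v - l).
Proof. move=> h e e0; have [N hN] := h e e0; exists N => n hn.
have -> : v - u n - (v - l) = l - u n by rewrite opprB addrC addrA addrNK.
by rewrite n2_sym //; exact: hN. Qed.

Definition subsp (M : V -> Prop) := [/\ M 0, (forall a x y, M x -> M y -> M (a *: x + y))
  & (forall u l, (forall n, M (u n)) -> cvg u l -> M l)].

Lemma parallelogram x y : n2 (x + y) + n2 (x - y) = 2 * n2 x + 2 * n2 y.
Proof. rewrite n2D // n2B //; ring. Qed.

Theorem proj_exists M : subsp M -> forall v, exists p, M p /\ forall m, M m -> ip (v - p) m = 0.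
Proof.
case=> M0 Ml Mc v.
have MZ : forall a x, M x -> M (a *: x) by move=> a x Mx; rewrite -[a *: x]addr0; exact: Ml.
have MD : forall x y, M x -> M y -> M (x + y) by move=> x y Mx My; rewrite -[x]scale1r; exact: Ml.
pose D := fun r : F => exists m, M m /\ r = n2 (v - m).
have hlb : has_lbound D by exists 0 => r [m [_ ->]]; exact: n2_ge0.
have hinf : has_inf D by split => //; exists (n2 (v - 0)); exists 0.
set d := inf D.
have lbd : forall m, M m -> d <= n2 (v - m).
  by move=> m Mm; apply: (ge_inf hlb); exists m.
have : forall k : nat, exists m, M m /\ n2 (v - m) < d + (k.+1%:R)^-1.
  move=> k; have ik : 0 < (k.+1%:R : F)^-1 by rewrite invr_gt0 ltr0Sn.
  by have [r [m [Mm ->]] hr] := inf_adherent ik hinf; exists m.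
case/choice => ms hms.
have cau : cauchy ip ms.
  move=> e e0; have e4 : 0 < e / 4 by rewrite divr_gt0.
  have [N hN] := small_inv e4; exists N => i j hi hj.
  have := parallelogram (v - ms i) (v - ms j).
  have -> : v - ms i - (v - ms j) = ms j - ms i.
    exact: subsub.
  have -> : v - ms i + (v - ms j) = (2 : C) *: (v - (2 : C)^-1 *: (ms i + ms j)).
    rewrite scalerBr scalerA mulfV ?scale1r; last by rewrite pnatr_eq0.
    by rewrite scaler_nat mulr2n opprD !addrA; congr (_ + _); rewrite -!addrA; congr (_ + _); rewrite addrC.
  rewrite n2Z // (_ : nc 2 = 4); last first.
    have -> : (2 : C) = ((2 : F)%:C)%C by rewrite rmorph_nat.
    by rewrite ncR expr2; lra.
  rewrite (n2_sym Hax (ms i)).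
  have := lbd _ (MZ (2 : C)^-1 _ (MD _ _ (hms i).1 (hms j).1)).
  have := (hms i).2; have := (hms j).2; have := hN i hi; have := hN j hj.
  have q4 : e = 4 * (e / 4) by field.
  move: (e / 4) q4 => q ->.
  set A := n2 (v - ms i); set B := n2 (v - ms j); set W := n2 (v - _ *: _); set X := n2 (ms j - ms i).
  move=> h1 h2 h3 h4 h5 h6.
  have : X = 2 * A + 2 * B - 4 * W by rewrite -h6; ring.
  move=> ->; move: h1 h2 h3 h4; move: (i.+1%:R^-1) (j.+1%:R^-1) => a b; lra.
have [p hp] := complete Hc cau.
have Mp : M p := Mc _ _ (fun n => (hms n).1) hp.
have dp : n2 (v - p) <= d.
  apply: (le_eps (k := 1)) => // e e0.
  apply: (cvg_le Hax (cvg_sub v hp)).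
  have [N hN] := small_inv e0; exists N => n hn.
  have := (hms n).2; have := hN n hn; move: (n.+1%:R^-1) => a; lra.
exists p; split=> // m Mm.
set z := v - p; set a := ip z m.
have key : forall s : F, 0 < s -> 2 * s * nc a <= s ^+ 2 * nc a * n2 m.
  move=> s s0; have := lbd _ (MD _ _ Mp (MZ ((s%:C)%C * a) _ Mm)).
  have -> : v - (p + ((s%:C)%C * a) *: m) = z - ((s%:C)%C * a) *: m by rewrite opprD addrA.
  rewrite n2B // n2Z // ipZr // ncM ncR conjM conjR -/a -(mulrA _ (conjc a) a) (mulrC (conjc a) a) mul_conj.
  rewrite ReM /= mul0r subr0; move: dp; rewrite -/z; lra.
have mp := n2_ge0 Hax m; have cp := nc_ge0 a.
have s0 : 0 < (n2 m + 1)^-1 by rewrite invr_gt0; lra.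
have := key _ s0; have : (n2 m + 1)^-1 * (n2 m + 1) = 1 by rewrite mulVf // gt_eqF //; lra.
move: s0; set s := (n2 m + 1)^-1 => s1 hs hk; clearbody s.
have sn : s * n2 m = 1 - s by rewrite -hs; ring.
have e1 : s ^+ 2 * nc a * n2 m = s * nc a * (1 - s) by rewrite -sn; ring.
rewrite e1 in hk.
have : nc a * (s * (1 + s)) <= 0 by nra.
rewrite pmulr_lle0; last by apply: mulr_gt0 => //; lra.
move=> h; apply: nc_eq0; apply/eqP; rewrite eq_le h cp. done. Qed.

Theorem riesz (g : V -> C) c : (forall a x y, g (a *: x + y) = a * g x + g y) ->
  (forall x, nc (g x) <= c * n2 x) -> exists z, forall y, g y = ip y z.
Proof.
move=> gl gb.
have g0 : g 0 = 0.
  have := gl 1 0 0; rewrite scaler0 addr0 mul1r => h.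
  have: g 0 + g 0 - g 0 = g 0 - g 0 by rewrite -h.
  by rewrite addrK subrr.
have gZ : forall a x, g (a *: x) = a * g x by move=> a x; rewrite -[a *: x]addr0 gl g0 addr0.
have gD : forall x y, g (x + y) = g x + g y by move=> x y; have := gl 1 x y; rewrite scale1r mul1r.
have gB : forall x y, g (x - y) = g x - g y.
  by move=> x y; rewrite gD -scaleN1r gZ mulN1r.
have [allz|] := pselect (forall y, g y = 0).
  by exists 0 => y; rewrite allz (ip0r Hax).
move=> /existsNP [y0 gy0].
pose N := fun y => g y = 0.
have sN : subsp N.
  split; first exact: g0.
    by move=> a x y; rewrite /N gl => -> ->; rewrite mulr0 addr0.
  move=> u l Nu hu; rewrite /N; apply: nc_eq0; apply/eqP; rewrite eq_le nc_ge0 andbT.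
  apply: (le_eps (k := `|c| + 1)); first by have := normr_ge0 c; lra.
  move=> dd d0; have [K hK] := hu dd d0.
  have : g l = - g (u K - l) by rewrite gB Nu sub0r opprK.
  move=> ->; rewrite ncN; apply: le_trans (gb _) _.
  have := hK K (leqnn _); have := n2_ge0 Hax (u K - l); have := ler_norm c.
  have := normr_ge0 c; nra.
have [p [Np op]] := proj_exists sN y0.
set z0 := y0 - p.
have gz0 : g z0 = g y0 by rewrite /z0 gB Np subr0.
have gz0n : g z0 != 0 by rewrite gz0; apply/eqP.
have z0n : z0 != 0 by apply: contra gz0n => /eqP ->; rewrite g0.
have n2p : (n2 z0 != 0) by apply: contra z0n => /eqP h; apply/eqP; exact: n2_eq0 h.
have rep : forall y, ip y z0 = g y / g z0 * ((n2 z0)%:C)%C.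
  move=> y; pose w := y - (g y / g z0) *: z0.
  have Nw : N w by rewrite /N /w gB gZ mulfVK ?subrr.
  have := op _ Nw; rewrite -/z0 => h.
  have : ip w z0 = 0 by rewrite ip_sym // h conj0.
  rewrite /w ipBl // ipZl // ipxx // => /eqP; rewrite subr_eq0 => /eqP; done.
exists ((conjc (g z0) / ((n2 z0)%:C)%C) *: z0) => y.
rewrite ipZr // rep conjM conjc_inv conjR conj_conj.
have rn : ((n2 z0)%:C)%C != 0 :> C by rewrite (inj_eq (@complexI _)).
field. by apply/andP. Qed.
End Proj.

Lemma subDD (Z : zmodType) (a b c d : Z) : (a + b) - (c + d) = (a - c) + (b - d).
Proof. by rewrite opprD addrACA. Qed.

Section ProjFacts.
Variable F : realType.
Local Notation C := (F[i]).
Local Notation Re := (@complex.Re F).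
Variables (V : lmodType C) (ip : V -> V -> C).
Hypothesis Hax : inner_product_axioms ip.
Local Notation n2 := (n2 ip).
Variables (M : V -> Prop) (Pm : V -> V).
Hypothesis M0 : M 0.
Hypothesis Ml : forall a x y, M x -> M y -> M (a *: x + y).
Hypothesis hp : forall v, M (Pm v) /\ forall m, M m -> ip (v - Pm v) m = 0.

Lemma M_Z a x : M x -> M (a *: x). Proof. by move=> Mx; rewrite -[a *: x]addr0; exact: Ml. Qed.
Lemma M_D x y : M x -> M y -> M (x + y). Proof. by move=> Mx My; rewrite -[x]scale1r; exact: Ml. Qed.
Lemma M_N x : M x -> M (- x). Proof. by move=> Mx; rewrite -scaleN1r; exact: M_Z. Qed.
Lemma M_B x y : M x -> M y -> M (x - y). Proof. by move=> Mx My; apply: M_D => //; exact: M_N. Qed.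

Lemma orth_self x : M x -> (forall m, M m -> ip x m = 0) -> x = 0.
Proof. by move=> Mx h; apply: (ip_def Hax); exact: h. Qed.

Lemma proj_id m : M m -> Pm m = m.
Proof. move=> Mm; apply/eqP; rewrite eq_sym -subr_eq0; apply/eqP.
apply: orth_self; first by apply: M_B => //; exact: (hp m).1.
exact: (hp m).2. Qed.

Lemma proj_ip v m : M m -> ip (Pm v) m = ip v m.
Proof. move=> Mm; have := (hp v).2 m Mm; rewrite (ipBl Hax) => /eqP.
by rewrite subr_eq0 => /eqP. Qed.

Lemma proj_lin a x y : Pm (a *: x + y) = a *: Pm x + Pm y.
Proof.
apply/eqP; rewrite -subr_eq0; apply/eqP; apply: orth_self.
  by apply: M_B; [exact: (hp _).1 | apply: Ml; exact: (hp _).1].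
move=> m Mm.
rewrite (ipBl Hax) (ipDl Hax) (ipZl Hax) !proj_ip // (ip_lin Hax); ring. Qed.

Lemma proj_pyth v : n2 v = n2 (Pm v) + n2 (v - Pm v).
Proof.
rewrite -{1}(subrK (Pm v) v) (n2D Hax (v - Pm v) (Pm v)) (hp v).2; last exact: (hp v).1.
by rewrite /= mulr0 addr0 addrC. Qed.

Lemma proj_le v : n2 (Pm v) <= n2 v.
Proof. by rewrite (proj_pyth v) lerDl n2_ge0. Qed.
Lemma proj_le' v : n2 (v - Pm v) <= n2 v.
Proof. by rewrite (proj_pyth v) lerDr n2_ge0. Qed.
End ProjFacts.

Section More.
Variable F : realType.
Local Notation C := (F[i]).
Local Notation Re := (@complex.Re F).
Variables (V : lmodType C) (ip : V -> V -> C).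
Local Notation n2 := (n2 ip).
Local Notation cvg := (cvg ip).

Lemma complete_conv : (forall u, cauchy ip u -> exists l, cvg u l) -> ip_complete ip.
Proof.
move=> hc u cu; have [l hl] : exists l, cvg u l.
  apply: hc => e e0; have se : 0 < Num.sqrt e by rewrite sqrtr_gt0.
  have [N hN] := cu _ se; exists N => m n hm hn.
  by have := hN m n hm hn; rewrite /ip_norm -/(n2 _) ltr_sqrt.
exists l => e e0; have [N hN] := hl (e ^+ 2) (exprn_gt0 _ e0).
by exists N => n hn; rewrite /ip_norm -/(n2 _) n2_sqrt_lt // hN.
Qed.

Definition vlim (u : nat -> V) : V :=
  match pselect (exists l, cvg u l) with left p => projT1 (cid p) | right _ => 0 end.
Lemma vlimP u : (exists l, cvg u l) -> cvg u (vlim u).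
Proof. rewrite /vlim => h; case: pselect => // p; exact: (projT2 (cid p)). Qed.
Lemma cvg_shift u l : cvg u l -> cvg (fun n => u n.+1) l.
Proof. move=> h e e0; have [N hN] := h e e0; exists N => n hn; apply: hN; exact: leqW. Qed.
Lemma cvg_ext u v l : (forall n, u n = v n) -> cvg u l -> cvg v l.
Proof. move=> E h e e0; have [N hN] := h e e0; exists N => n hn; rewrite -E; exact: hN. Qed.
End More.

Lemma cvg_map (F : realType) (V W : lmodType F[i]) (ipV : V -> V -> F[i]) (ipW : W -> W -> F[i])
  (HaxV : inner_product_axioms ipV)
  (f : V -> W) (c : F) u l : (forall x y, f (x - y) = f x - f y) ->
  (forall x, n2 ipW (f x) <= c * n2 ipV x) -> cvg ipV u l -> cvg ipW (fun n => f (u n)) (f l).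
Proof.
move=> fB fb h e e0; have k0 : 0 < `|c| + 1 by have := normr_ge0 c; lra.
have [N hN] := h _ (divr_gt0 e0 k0); exists N => n hn; rewrite -fB.
apply: le_lt_trans (fb _) _.
have h1 := hN n hn; have hd := n2_ge0 HaxV (u n - l).
move: h1 hd; set d := n2 ipV _ => h1 hd.
have h2 : d * (`|c| + 1) < e by rewrite -ltr_pdivlMr.
have := ler_norm c; have := normr_ge0 c; nra. Qed.

Section Lin.
Variable F : realType.
Variables (V W : hilbertSpace F) (f : V -> W).
Hypothesis hf : is_linear f.
Lemma lin0 : f 0 = 0.
Proof. have := hf 1 0 0; rewrite scaler0 addr0 scale1r => h.
have: f 0 + f 0 - f 0 = f 0 - f 0 by rewrite -h. by rewrite addrK subrr. Qed.
Lemma linD x y : f (x + y) = f x + f y. Proof. by have := hf 1 x y; rewrite !scale1r. Qed.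
Lemma linZ a x : f (a *: x) = a *: f x. Proof. by have := hf a x 0; rewrite !addr0 lin0 addr0. Qed.
Lemma linN x : f (- x) = - f x. Proof. by rewrite -scaleN1r linZ scaleN1r. Qed.
Lemma linB x y : f (x - y) = f x - f y. Proof. by rewrite linD linN. Qed.
Lemma lin_sum I (r : seq I) (Pr : pred I) (g : I -> V) :
  f (\sum_(i <- r | Pr i) g i) = \sum_(i <- r | Pr i) f (g i).
Proof. by elim/big_rec2: _ => [|i a b _ <-]; rewrite ?lin0 ?linD. Qed.
End Lin.

Lemma iter_lin (F : realType) (V : hilbertSpace F) (f : V -> V) n :
  is_linear f -> is_linear (iter n f).
Proof. move=> hf; elim: n => [|n IH] a x y //=; by rewrite IH hf. Qed.

Lemma hnormE (F : realType) (V : hilbertSpace F) (x : V) : hnorm x = Num.sqrt (n2 (@hs_ip F V) x).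
Proof. by []. Qed.

Lemma sq_le (F : realType) (a b c : F) : 0 <= a -> 0 <= b -> Num.sqrt a <= c * Num.sqrt b -> a <= c ^+ 2 * b.
Proof.
move=> a0 b0 h; have [c0|c0] := leP 0 c.
  have := ler_pM (sqrtr_ge0 a) (sqrtr_ge0 a) h h.
  by rewrite -expr2 sqr_sqrtr // mulrACA -expr2 -(expr2 (Num.sqrt b)) sqr_sqrtr.
have : Num.sqrt a <= 0 by apply: le_trans h _; have := sqrtr_ge0 b; nra.
have := sqrtr_ge0 a => h1 h2; have : Num.sqrt a == 0 by rewrite eq_le h1 h2.
rewrite sqrtr_eq0 => ha; apply: le_trans ha _; apply: mulr_ge0 => //; exact: sqr_ge0. Qed.

Lemma bnd_n2 (F : realType) (V W : hilbertSpace F) (f : V -> W) : bounded_op f ->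
  exists c, 0 <= c /\ forall x, n2 (@hs_ip F W) (f x) <= c * n2 (@hs_ip F V) x.
Proof. case=> _ [c hc]; exists (c ^+ 2); split; first exact: sqr_ge0.
move=> x; apply: sq_le; [exact: n2_ge0 (hs_ip_axioms W) _ | exact: n2_ge0 (hs_ip_axioms V) _ | exact: hc]. Qed.

Lemma hn_n2_le (F : realType) (V W : hilbertSpace F) (x : V) (y : W) :
  hnorm x <= hnorm y -> n2 (@hs_ip F V) x <= n2 (@hs_ip F W) y.
Proof. move=> h; have := sq_le (n2_ge0 (hs_ip_axioms V) x) (n2_ge0 (hs_ip_axioms W) y) (c := 1).
by rewrite mul1r expr1n mul1r; apply. Qed.

Lemma n2_hn_le (F : realType) (V W : hilbertSpace F) (x : V) (y : W) :
  n2 (@hs_ip F V) x <= n2 (@hs_ip F W) y -> hnorm x <= hnorm y.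
Proof. by move=> h; rewrite !hnormE; apply: ler_wsqrtr. Qed.

Lemma hn_n2_eq (F : realType) (V W : hilbertSpace F) (x : V) (y : W) :
  hnorm x = hnorm y -> n2 (@hs_ip F V) x = n2 (@hs_ip F W) y.
Proof. by move=> h; apply/eqP; rewrite eq_le !hn_n2_le // h. Qed.

Section Main.
Variable F : realType.
Local Notation C := (F[i]).
Local Notation Re := (@complex.Re F).
Variables (H0 H K : hilbertSpace F) (H' : K -> Prop) (P : K -> K) (A : H -> K)
  (T U : K -> K) (R Q : H0 -> H).
Hypothesis hH' : closed_subspace H'.
Hypothesis hP : orth_proj H' P.
Hypothesis hA : contraction A.
Hypothesis hAH : forall h, H' (A h).
Hypothesis hT : contraction_on H' T.
Hypothesis hU : minimal_isometric_lifting H' P T U.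
Hypothesis hR : bounded_op R.
Hypothesis hQ : bounded_op Q.
Hypothesis hTAR : forall x, T (A (R x)) = A (Q x).
Hypothesis hRQ : op_le_sq R Q.
Hypothesis hAs : strict_contraction A.
Hypothesis hRi : left_invertible R.

Local Notation ipK := (@hs_ip F K).
Local Notation ipH := (@hs_ip F H).
Local Notation nK := (n2 (@hs_ip F K)).
Local Notation nH := (n2 (@hs_ip F H)).
Local Notation nH0 := (n2 (@hs_ip F H0)).
Let axK := hs_ip_axioms K.
Let axH := hs_ip_axioms H.
Let axH0 := hs_ip_axioms H0.

Lemma H'0 : H' 0. Proof. by case: hH'. Qed.
Lemma H'l a x y : H' x -> H' y -> H' (a *: x + y). Proof. by case: hH' => _ h _; apply: h. Qed.
Lemma hP' v : H' (P v) /\ forall m, H' m -> ipK (v - P v) m = 0. Proof. exact: hP. Qed.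
Lemma P_in v : H' (P v). Proof. exact: (hP' v).1. Qed.
Lemma P_id m : H' m -> P m = m. Proof. exact: (proj_id axK H'0 H'l hP'). Qed.
Lemma P_lin a x y : P (a *: x + y) = a *: P x + P y. Proof. exact: (proj_lin axK H'0 H'l hP'). Qed.
Lemma P_pyth v : nK v = nK (P v) + nK (v - P v). Proof. exact: (proj_pyth axK hP'). Qed.
Lemma P_linear : is_linear P. Proof. move=> a x y; exact: P_lin. Qed.
Lemma P_idem v : P (P v) = P v. Proof. exact: P_id (P_in v). Qed.
Lemma orthP z m : P z = 0 -> H' m -> ipK z m = 0.
Proof. by move=> pz hm; have := (hP' z).2 m hm; rewrite pz subr0. Qed.

Lemma T0 : T 0 = 0.
Proof. case: hT => _ hl _; have := hl 1 0 0 H'0 H'0; rewrite scaler0 addr0 scale1r => h.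
have: T 0 + T 0 - T 0 = T 0 - T 0 by rewrite -h. by rewrite addrK subrr. Qed.

Lemma U_linear : is_linear U. Proof. by case: hU => [[[]]]. Qed.
Lemma U_n2 x : nK (U x) = nK x. Proof. case: hU => [[_ h]] _ _; exact: hn_n2_eq. Qed.
Lemma PU k : P (U k) = T (P k). Proof. by case: hU. Qed.
Lemma PU0 z : P z = 0 -> P (U z) = 0. Proof. by rewrite PU => ->; rewrite T0. Qed.
Lemma PUn z n : P z = 0 -> P (iter n U z) = 0.
Proof. by move=> pz; elim: n => //= n IH; apply: PU0. Qed.

Lemma U_re x y : Re (ipK (U x) (U y)) = Re (ipK x y).
Proof. have := U_n2 (x + y); rewrite (linD U_linear) !(n2D axK) !U_n2; lra. Qed.
Lemma U_ip x y : ipK (U x) (U y) = ipK x y.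
Proof. apply: c_eq; first exact: U_re.
by rewrite -!(Re_ip_i axK) -(linZ U_linear) U_re. Qed.
Lemma U_ipn n x y : ipK (iter n U x) (iter n U y) = ipK x y.
Proof. by elim: n => //= n IH; rewrite U_ip. Qed.

Definition Lset v := P v = 0 /\ forall z, P z = 0 -> ipK v (U z) = 0.

Lemma Lset_orth1 v w n m : Lset v -> Lset w -> (n < m)%N -> ipK (iter n U v) (iter m U w) = 0.
Proof.
move=> [pv ov] [pw ow] /subnKC <-; rewrite iterD iterSr U_ipn.
apply: ov; exact: PUn. Qed.
Lemma Lset_orth v w n m : Lset v -> Lset w -> n != m -> ipK (iter n U v) (iter m U w) = 0.
Proof.
move=> lv lw; case: ltngtP => // h _; first exact: Lset_orth1.
by rewrite (ip_sym axK) Lset_orth1 // conj0. Qed.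
Lemma Lset0 : Lset 0.
Proof. split; first exact: P_id H'0.
by move=> z _; rewrite (ip0l axK). Qed.
Lemma P0 : P 0 = 0. Proof. by case: Lset0. Qed.
Lemma Lset_l a v w : Lset v -> Lset w -> Lset (a *: v + w).
Proof. move=> [pv ov] [pw ow]; split; first by rewrite P_lin pv pw scaler0 addr0.
by move=> z pz; rewrite (ip_lin axK) ov // ow // mulr0 addr0. Qed.
Lemma Lset_gamma k : H' k -> Lset (U k - P (U k)).
Proof.
move=> hk; split; first by rewrite -scaleN1r addrC P_lin P_idem scaleN1r addNr.
move=> z pz; rewrite (ipBl axK) U_ip (ip_sym axK (U z)).
rewrite (ip_sym axK z) orthP // (orthP (PU0 pz) (P_in _)) conj0 subrr //. Qed.

Lemma A_lin : is_linear A. Proof. by case: hA => [[]]. Qed.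
Lemma R_lin : is_linear R. Proof. by case: hR. Qed.
Lemma Q_lin : is_linear Q. Proof. by case: hQ. Qed.
Definition nA (h : H) := nH h - nK (A h).
Lemma nA_ge0 h : 0 <= nA h.
Proof. case: hA => _ h1; have := hn_n2_le (h1 h); rewrite /nA; lra. Qed.

Lemma cvg_addl (V : lmodType C) (ip : V -> V -> C) c u l :
  cvg ip u l -> cvg ip (fun n => c + u n) (c + l).
Proof. move=> h e e0; have [N hN] := h e e0; exists N => n hn.
by rewrite opprD addrACA subrr add0r; exact: hN. Qed.

Lemma U_cvg u l : cvg ipK u l -> cvg ipK (fun n => U (u n)) (U l).
Proof. apply: (@cvg_map _ _ _ _ _ axK U 1) => //; first by move=> x y; rewrite (linB U_linear).
by move=> x; rewrite U_n2 mul1r. Qed.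
Lemma P_cvg u l : cvg ipK u l -> cvg ipK (fun n => P (u n)) (P l).
Proof. apply: (@cvg_map _ _ _ _ _ axK P 1) => //.
  by move=> x y; rewrite -scaleN1r addrC P_lin scaleN1r addrC.
move=> x; rewrite mul1r; exact: (proj_le axK hP'). Qed.

Lemma n2_sum_ord (t : nat -> K) N : (forall i j, i != j -> ipK (t i) (t j) = 0) ->
  nK (\sum_(i < N) t i) = \sum_(i < N) nK (t i).
Proof. move=> o; rewrite -(big_mkord xpredT t) -(big_mkord xpredT (fun i => nK (t i))).
exact: n2_sum_orth (iota_uniq _ _) o. Qed.

Section Series.
Variables (G1 : H -> K) (G2 : H -> H).
Hypothesis G1l : is_linear G1.
Hypothesis G2l : is_linear G2.
Hypothesis G1L : forall h, Lset (G1 h).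
Hypothesis Gc : forall h, nK (G1 h) + nA (G2 h) <= nA h.

Definition term h n := iter n U (G1 (iter n G2 h)).
Definition Ssum h N := \sum_(i < N) term h i.
Definition Eg h := vlim ipK (Ssum h).

Lemma term_orth h i j : i != j -> ipK (term h i) (term h j) = 0.
Proof. by move=> ij; apply: Lset_orth. Qed.
Lemma term_n2 h n : nK (term h n) = nK (G1 (iter n G2 h)).
Proof. rewrite /term; elim: n (G1 _) => //= n IH x; by rewrite U_n2 IH. Qed.
Lemma sum_bound h N : \sum_(i < N) nK (term h i) <= nA h - nA (iter N G2 h).
Proof. elim: N => [|N IH]; first by rewrite big_ord0 subrr.
rewrite big_ord_recr /= term_n2; have := Gc (iter N G2 h); lra. Qed.
Lemma S_cauchy h : cauchy ipK (Ssum h).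
Proof. apply: (series_cauchy axK (b := nA h)); first exact: term_orth.
move=> N; apply: le_trans (sum_bound h N) _; have := nA_ge0 (iter N G2 h); lra. Qed.
Lemma E_cvg h : cvg ipK (Ssum h) (Eg h).
Proof. apply: vlimP; apply: complete (S_cauchy h); exact: hs_complete. Qed.
Lemma term_lin a x y n : term (a *: x + y) n = a *: term x n + term y n.
Proof. by rewrite /term (iter_lin n G2l) G1l (iter_lin n U_linear). Qed.
Lemma Ssum_lin a x y N : Ssum (a *: x + y) N = a *: Ssum x N + Ssum y N.
Proof. rewrite /Ssum scaler_sumr -big_split /=; apply: eq_bigr => i _; exact: term_lin. Qed.
Lemma E_lin : is_linear Eg.
Proof. move=> a x y; apply: (cvg_unique axK (E_cvg _)).
apply: cvg_ext (cvg_lin axK a (E_cvg x) (E_cvg y)) => n; by rewrite Ssum_lin. Qed.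
Lemma S_rec h N : Ssum h N.+1 = G1 h + U (Ssum (G2 h) N).
Proof. rewrite /Ssum big_ord_recl (lin_sum U_linear); congr (_ + _).
by apply: eq_bigr => i _; rewrite /term /= add0n -(iterS i G2) iterSr. Qed.
Lemma E_rec h : Eg h = G1 h + U (Eg (G2 h)).
Proof. apply: (cvg_unique axK (cvg_shift (E_cvg h))).
apply: cvg_ext (cvg_addl (G1 h) (U_cvg (E_cvg (G2 h)))) => n; by rewrite S_rec. Qed.
Lemma PE h : P (Eg h) = 0.
Proof. apply: (cvg_unique axK (P_cvg (E_cvg h))); apply: cvg_ext (cvg_const axK 0) => n.
rewrite /Ssum (lin_sum P_linear) big1 // => i _; rewrite /term PUn //; exact: (G1L _).1. Qed.
Lemma nE h : nK (Eg h) <= nA h.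
Proof. apply: (cvg_le axK (E_cvg h)); exists 0%N => N _; rewrite /Ssum n2_sum_ord; last exact: term_orth.
apply: le_trans (sum_bound h N) _; have := nA_ge0 (iter N G2 h); lra. Qed.

Definition Bg h := A h + Eg h.
Hypothesis GQ1 : forall x, G1 (Q x) = U (A (R x)) - P (U (A (R x))).
Hypothesis GQ2 : forall x, G2 (Q x) = R x.

Lemma Bg_n2 h : nK (Bg h) = nK (A h) + nK (Eg h).
Proof. rewrite /Bg (n2D axK) (ip_sym axK) (orthP (PE h) (hAH h)) conj0 /=; lra. Qed.
Lemma Bg_interp : contractive_interpolant P A U R Q Bg.
Proof.
split.
- have hb : forall x, hnorm (Bg x) <= hnorm x.
    move=> x; apply: n2_hn_le; rewrite Bg_n2; have := nE x; rewrite /nA; lra.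
  split=> //; split; last by exists 1 => x; rewrite mul1r.
  by move=> a x y; rewrite /Bg A_lin E_lin scalerDr addrACA.
- by move=> h; rewrite /Bg (linD P_linear) P_id // PE addr0.
- move=> x; rewrite /Bg (E_rec (Q x)) GQ1 GQ2 (linD U_linear) PU P_id // hTAR.
  by rewrite addrA [A _ + _]addrC subrK.
Qed.
End Series.

Lemma RQ_n2 x : nH (R x) <= nH (Q x). Proof. exact: hn_n2_le (hRQ x). Qed.
Lemma Q_below : exists cD, 0 <= cD /\ forall x, nH0 x <= cD * nH (Q x).
Proof. case: hRi => D [bD DR]; have [c [c0 hc]] := bnd_n2 bD.
exists c; split=> // x; have := hc (R x); rewrite DR => h; apply: le_trans h _.
apply: ler_wpM2l => //; exact: RQ_n2. Qed.
Lemma Q_inj x y : Q x = Q y -> x = y.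
Proof. move=> e; have [c [c0 hc]] := Q_below; apply/eqP; rewrite -subr_eq0; apply/eqP.
apply: (n2_eq0 axH0); apply/eqP; rewrite eq_le n2_ge0 // andbT.
by have := hc (x - y); rewrite (linB Q_lin) e subrr n20 // mulr0. Qed.
Definition Qinv (h : H) : H0 :=
  match pselect (exists x, Q x = h) with left p => projT1 (cid p) | right _ => 0 end.
Lemma Qinv_spec h : (exists x, Q x = h) -> Q (Qinv h) = h.
Proof. rewrite /Qinv => ex; case: pselect => // p; exact: (projT2 (cid p)). Qed.
Lemma QinvK x : Qinv (Q x) = x.
Proof. apply: Q_inj; apply: Qinv_spec; by exists x. Qed.

Lemma lin_comp (V W X : hilbertSpace F) (f : W -> X) (g : V -> W) :
  is_linear f -> is_linear g -> is_linear (fun x => f (g x)).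
Proof. by move=> hf hg a x y; rewrite hg hf. Qed.
Lemma UmP_lin : is_linear (fun k => U k - P (U k)).
Proof. move=> a x y; rewrite U_linear P_lin scalerBr.
by rewrite -!addrA; congr (_ + _); rewrite opprD addrCA. Qed.

Section Gam.
Variable Pm : H -> H.
Hypothesis Pml : is_linear Pm.
Hypothesis PmQ : forall h, exists x, Q x = Pm h.
Hypothesis PmQx : forall x, Pm (Q x) = Q x.
Hypothesis Pmc : forall h, nA (Pm h) <= nA h.
Definition Gx h := Qinv (Pm h).
Lemma Gx_lin : is_linear Gx.
Proof. move=> a x y; apply: Q_inj; rewrite /Gx Qinv_spec // Q_lin !Qinv_spec //; exact: Pml. Qed.
Definition G1 h := U (A (R (Gx h))) - P (U (A (R (Gx h)))).
Definition G2 h := R (Gx h).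
Lemma G2_lin : is_linear G2. Proof. exact: lin_comp R_lin Gx_lin. Qed.
Lemma G1_lin : is_linear G1.
Proof. apply: (lin_comp UmP_lin); apply: (lin_comp A_lin); exact: G2_lin. Qed.
Lemma G1_L h : Lset (G1 h). Proof. exact: Lset_gamma. Qed.
Lemma G_c' h : nK (G1 h) + nA (G2 h) <= nA (Pm h).
Proof.
rewrite /G1 /G2; have [x ex] := PmQ h.
rewrite /Gx -ex QinvK PU P_id // hTAR.
have e1 := P_pyth (U (A (R x))); rewrite U_n2 PU P_id // hTAR in e1.
have := RQ_n2 x; rewrite /nA; lra. Qed.
Lemma G_c h : nK (G1 h) + nA (G2 h) <= nA h.
Proof. exact: le_trans (G_c' h) (Pmc h). Qed.
Lemma GQ1 x : G1 (Q x) = U (A (R x)) - P (U (A (R x))).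
Proof. by rewrite /G1 /Gx PmQx QinvK. Qed.
Lemma GQ2 x : G2 (Q x) = R x.
Proof. by rewrite /G2 /Gx PmQx QinvK. Qed.
Lemma exists_interp : contractive_interpolant P A U R Q (Bg G1 G2).
Proof. apply: Bg_interp; [exact: G1_lin | exact: G2_lin | exact: G1_L | exact: G_c | exact: GQ1 | exact: GQ2]. Qed.
End Gam.

Lemma H'_sum I (r : seq I) (Pr : pred I) (g : I -> K) :
  (forall i, Pr i -> H' (g i)) -> H' (\sum_(i <- r | Pr i) g i).
Proof. move=> hg; apply: big_ind => //; first exact: H'0.
by move=> x y hx hy; rewrite -[x]scale1r; exact: H'l. Qed.

Lemma iso_all (iso : isometry_on H' T) : forall k, H' k.
Proof.
have UH : forall h, H' h -> H' (U h).
  move=> h hh; have e1 := P_pyth (U h); rewrite U_n2 in e1.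
  have e2 : nK (P (U h)) = nK h by rewrite PU P_id //; exact: hn_n2_eq (iso h hh).
  have : U h - P (U h) = 0 by apply: (n2_eq0 axK); lra.
  move/eqP; rewrite subr_eq0 => /eqP ->; exact: P_in.
have UHn : forall n h, H' h -> H' (iter n U h) by move=> n h hh; elim: n => //= n IH; exact: UH.
have span : forall v, lin_span (fun y => exists n h, H' h /\ y = iter n U h) v -> H' v.
  move=> v [n [a [w [hw ->]]]]; apply: H'_sum => i _; rewrite -[_ *: _]addr0; apply: H'l; last exact: H'0.
  by have [m [h [hh ->]]] := hw i; exact: UHn.
case: hH' => _ _ cl; case: hU => _ _ mn k; apply: cl => e e0.
have [x [hx hlt]] := mn k e e0; exists x; split=> //; exact: span. Qed.

Lemma iso_case (iso : isometry_on H' T) :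
  exists B, contractive_interpolant P A U R Q B /\
    forall B', contractive_interpolant P A U R Q B' -> B' = B.
Proof.
have all := iso_all iso.
exists A; split.
  split=> //; first by move=> h; rewrite P_id.
  by move=> x; rewrite -(P_id (all (U _))) PU P_id.
move=> B' [_ hp _]; apply: funext => h; by rewrite -hp P_id.
Qed.

Lemma closedQ (u : nat -> H0) l : cvg ipH (fun n => Q (u n)) l -> exists x, Q x = l.
Proof.
move=> hl; have [c [c0 hc]] := Q_below.
have cu : cauchy (@hs_ip F H0) u.
  move=> e e0; have k0 : 0 < 4 * (c + 1) by lra.
  have [N hN] := hl _ (divr_gt0 e0 k0); exists N => m n hm hn.
  apply: le_lt_trans (hc _) _; rewrite (linB Q_lin).
  have -> : Q (u m) - Q (u n) = (Q (u m) - l) + (l - Q (u n)).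
    by rewrite addrA subrK.
  apply: le_lt_trans (ler_wpM2l c0 (n2D_le2 axH _ _)) _.
  have h1 := hN m hm; have h2 := hN n hn; rewrite (n2_sym axH l) in h1 h2 *.
  have hq : c * (e / (4 * (c + 1))) <= e / 4.
    have -> : c * (e / (4 * (c + 1))) = e / 4 - e / (4 * (c + 1)).
      by field; rewrite gt_eqF //; lra.
    have : 0 < e / (4 * (c + 1)) by apply: divr_gt0.
    lra.
  move: (e / (4 * (c + 1))) hq h1 h2 => q hq h1 h2.
  have := n2_ge0 axH (Q (u m) - l); have := n2_ge0 axH (Q (u n) - l); nra.
have [x hx] := complete (@hs_complete F H0) cu.
exists x; have [cq [cq0 hcq]] := bnd_n2 hQ.
apply: (cvg_unique axH (cvg_map axH0 (linB Q_lin) hcq hx) hl). Qed.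

Lemma dense_surj (dn : forall h, hclosure (fun y => exists x, y = Q x) h) : forall h, exists x, Q x = h.
Proof.
move=> h; have : forall n : nat, exists x, nH (Q x - h) < (n.+1%:R)^-1.
  move=> n; have ip0 : 0 < (n.+1%:R : F)^-1 by rewrite invr_gt0 ltr0Sn.
  have en : 0 < Num.sqrt ((n.+1%:R : F)^-1) by rewrite sqrtr_gt0.
  have [y [[x ->] hy]] := dn h _ en; exists x.
  by rewrite (n2_sym axH); move: hy; rewrite hnormE ltr_sqrt.
case/choice => u hu.
apply: (closedQ (u := u)) => e e0; have [N hN] := small_inv e0; exists N => n hn.
have := hu n; have := hN n hn; move: (n.+1%:R^-1) => a; lra. Qed.

Lemma dense_case (dn : forall h, hclosure (fun y => exists x, y = Q x) h) :
  exists B, contractive_interpolant P A U R Q B /\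
    forall B', contractive_interpolant P A U R Q B' -> B' = B.
Proof.
have surj := dense_surj dn.
pose B0 := Bg (G1 id) (G2 id).
have iB0 : contractive_interpolant P A U R Q B0.
  apply: exists_interp => //; by move=> h; apply: surj.
exists B0; split => // B' iB'.
apply: funext => h; apply/eqP; rewrite -subr_eq0; apply/eqP.
pose Del h := B' h - B0 h.
case: iB' => cB' pB' qB'; case: iB0 => cB0 pB0 qB0.
have DQ : forall x, Del (Q x) = U (Del (R x)).
  by move=> x; rewrite /Del -qB' -qB0 (linB U_linear).
have PD : forall h, P (Del h) = 0.
  by move=> k; rewrite /Del -scaleN1r addrC P_lin scaleN1r pB' pB0 addNr.
have key : forall j h k, H' k -> ipK (Del h) (iter j U k) = 0.
  elim=> [|j IH] h1 k hk; first exact: orthP.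
  by have [x <-] := surj h1; rewrite DQ /= U_ip; exact: IH.
have spn : forall s, lin_span (fun y => exists n h, H' h /\ y = iter n U h) s -> ipK (Del h) s = 0.
  move=> s [n [a [w [hw ->]]]]; rewrite (ip_sumr axK) big1 // => i _.
  by rewrite (ipZr axK); have [m [k [hk ->]]] := hw i; rewrite key // mulr0.
rewrite -/(Del h); apply: (n2_eq0 axK); apply/eqP; rewrite eq_le n2_ge0 // andbT.
apply/ler_addgt0Pr => e e0; rewrite add0r.
have se : 0 < Num.sqrt e by rewrite sqrtr_gt0.
case: hU => _ _ mn; have [s [hs hlt]] := mn (Del h) _ se.
have : nK (Del h - s) < e by move: hlt; rewrite hnormE ltr_sqrt.
have := re_ineq axK 1 (Del h) (Del h - s).
rewrite (ipBr axK) (spn s hs) subr0 expr1n mul1r mulr1 -/(n2 (@hs_ip F K) (Del h)); lra. Qed.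

Lemma A_strict : exists c0, 0 <= c0 /\ c0 < 1 /\ forall h, nK (A h) <= c0 * nH h.
Proof.
case: hAs => _ [c [c1 hc]]; have [c0|c0] := leP c 0.
  exists 0; split=> //; split=> // h; rewrite mul0r.
  have := hc h; have := sqrtr_ge0 (nK (A h)); have := sqrtr_ge0 (nH h).
  rewrite !hnormE => h1 h2 h3; have : Num.sqrt (nK (A h)) <= 0 by nra.
  by move=> h4; rewrite -sqrtr_eq0 eq_le h4 h2.
exists (c ^+ 2); split; first exact: sqr_ge0; split; first nra.
move=> h; apply: sq_le; [exact: n2_ge0 | exact: n2_ge0 | exact: hc]. Qed.

Definition ipA (x y : H) : C := ipH x y - ipK (A x) (A y).
Lemma n2A x : n2 ipA x = nA x.
Proof. by rewrite /n2 /ipA ReD ReN. Qed.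

Lemma nA_lb : exists k, 0 < k /\ forall h, k * nH h <= nA h.
Proof. have [c0 [c00 [c01 hc]]] := A_strict; exists (1 - c0); split; first lra.
by move=> h; have := hc h; rewrite /nA; lra. Qed.

Lemma axA : inner_product_axioms ipA.
Proof.
split.
- move=> a x y z; rewrite /ipA A_lin !(ip_lin axH) !(ip_lin axK); ring.
- by move=> x y; rewrite /ipA conjD conjN -!(ip_sym axH) -!(ip_sym axK).
- move=> x; split; last by rewrite -/(n2 ipA x) n2A; exact: nA_ge0.
  by rewrite /ipA ImD ImN (ip_pos axH x).1 (ip_pos axK (A x)).1 subrr.
- move=> x h0; have : n2 ipA x = 0 by rewrite /n2 h0.
  rewrite n2A => h1; have [k [k0 hk]] := nA_lb; apply: (n2_eq0 axH).
  have := hk x; have := n2_ge0 axH x; rewrite h1 => h2 h3.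
  by apply/eqP; rewrite eq_le h2 andbT -(pmulr_rle0 _ k0). Qed.

Lemma cvgA_H u l : cvg ipA u l -> cvg ipH u l.
Proof. move=> h e e0; have [k [k0 hk]] := nA_lb.
have [N hN] := h (k * e) (mulr_gt0 k0 e0); exists N => n hn.
have := hN n hn; rewrite n2A => h1; have := hk (u n - l).
rewrite -(ltr_pM2l k0); lra. Qed.
Lemma cvgH_A u l : cvg ipH u l -> cvg ipA u l.
Proof. move=> h e e0; have [N hN] := h e e0; exists N => n hn.
rewrite n2A /nA; have := hN n hn; have := n2_ge0 axK (A (u n - l)); lra. Qed.

Lemma compA : ip_complete ipA.
Proof.
apply: complete_conv => u cu.
have cuH : cauchy ipH u.
  move=> e e0; have [k [k0 hk]] := nA_lb.
  have [N hN] := cu (k * e) (mulr_gt0 k0 e0); exists N => m n hm hn.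
  have := hN m n hm hn; rewrite n2A => h1; have := hk (u m - u n).
  rewrite -(ltr_pM2l k0); lra.
have [l hl] := complete (@hs_complete F H) cuH; exists l; exact: cvgH_A.
Qed.

Definition MQ (h : H) := exists x, Q x = h.
Lemma subspMQ : subsp ipA MQ.
Proof.
split.
- by exists 0; rewrite (lin0 Q_lin).
- by move=> a _ _ [x <-] [y <-]; exists (a *: x + y); rewrite Q_lin.
- move=> u l hu hl; case/choice: hu => xs hxs; apply: (closedQ (u := xs)).
  by apply: cvg_ext (cvgA_H hl) => n; rewrite hxs.
Qed.
Lemma PmA_ex : exists Pm : H -> H, forall v, MQ (Pm v) /\ forall m, MQ m -> ipA (v - Pm v) m = 0.
Proof. by have := proj_exists axA compA subspMQ; case/choice => f hf; exists f. Qed.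

Lemma lin_plus (V : lmodType C) (a t1 t2 : C) (g1 g2 w : V) :
  a *: g1 + g2 + (a * t1 + t2) *: w = a *: (g1 + t1 *: w) + (g2 + t2 *: w).
Proof. by rewrite scalerDl -scalerA scalerDr addrACA. Qed.

Lemma nonuniq (nd : ~ (forall h, hclosure (fun y => exists x, y = Q x) h))
  (ni : ~ isometry_on H' T) :
  ~ (exists B, contractive_interpolant P A U R Q B /\
       forall B', contractive_interpolant P A U R Q B' -> B' = B).
Proof.
move=> [B [_ uB]].
have [Pm hpm] := PmA_ex.
case: subspMQ => M0 Ml _.
have Pml : is_linear Pm by move=> a x y; exact: (proj_lin axA M0 Ml hpm).
have PmQ : forall h, exists x, Q x = Pm h by move=> h; exact: (hpm h).1.
have PmQx : forall x, Pm (Q x) = Q x by move=> x; apply: (proj_id axA M0 Ml hpm); exists x.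
have Pmc : forall h, nA (Pm h) <= nA h by move=> h; rewrite -!n2A; exact: (proj_le axA hpm).
move/existsNP: nd => [h0 nh0].
pose e := h0 - Pm h0.
have eo : forall m, MQ m -> ipA e m = 0 := (hpm h0).2.
have nAe : 0 < nA e.
  rewrite -n2A lt_def n2_ge0 ?andbT; last exact: axA.
  apply/eqP => /(n2_eq0 axA) /eqP; rewrite subr_eq0 => /eqP h0e; apply: nh0 => eps eps0.
  exists h0; split; first by have [x hx] := PmQ h0; exists x; rewrite hx.
  by rewrite subrr hnormE n20 // sqrtr0.
move/existsNP: ni => [h' /not_implyP [hh' nT]].
pose w1 := U h' - P (U h').
have Lw1 : Lset w1 := Lset_gamma hh'.
have w1n : 0 < nK w1.
  rewrite lt_def n2_ge0 ?andbT //; apply/eqP => /(n2_eq0 axK) /eqP; rewrite subr_eq0 => /eqP w0.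
  apply: nT; have -> : T h' = U h' by rewrite w0 PU P_id.
  by case: hU => [[_ ->]].
have [k [k0 hk]] := nA_lb.
pose g y := ipK (U (A y) - P (U (A y))) w1.
have gl : forall a x y, g (a *: x + y) = a * g x + g y.
  by move=> a x y; rewrite /g (lin_comp UmP_lin A_lin) (ip_lin axK).
have gb : forall x, nc (g x) <= (nK w1 / k) * n2 ipA x.
  move=> x; apply: le_trans (cs axK _ _) _; rewrite n2A.
  have h1 := proj_le' axK hP' (U (A x)); rewrite U_n2 in h1.
  have h2 : nK (A x) <= nH x by case: hA => _ hc; exact: hn_n2_le.
  have h3 := hk x.
  have h4 : nK (A x) <= nA x / k by rewrite ler_pdivlMr //; nra.
  have -> : nK w1 / k * nA x = (nA x / k) * nK w1 by ring.
  apply: ler_wpM2r; first exact: n2_ge0.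
  lra.
have [z hz] := riesz axA compA gl gb.
pose q := (nK w1 + nA z) * nA e.
have q0 : 0 <= q by apply: mulr_ge0; [have := nA_ge0 z; lra | exact: nA_ge0].
pose s := (1 + q)^-1.
have s0 : 0 < s by rewrite invr_gt0; lra.
have s1 : s * (1 + q) = 1 by rewrite mulVf // gt_eqF //; lra.
have sq : s ^+ 2 * q <= 1.
  have : s * q = 1 - s by rewrite -s1; ring.
  move: s s0 s1 => s' s0 s1 sq'; rewrite expr2 -mulrA sq'; nra.
pose w1' := ((s%:C)%C) *: w1.
pose w2' := ((s%:C)%C) *: (- z).
pose t h := ipA h e.
pose G1' h := G1 Pm h + t h *: w1'.
pose G2' h := G2 Pm h + t h *: w2'.
have tl : forall a x y, t (a *: x + y) = a * t x + t y by move=> a x y; exact: (ip_lin axA).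
have G1'l : is_linear G1'.
  move=> a x y; rewrite /G1' (G1_lin Pml PmQ) tl; exact: lin_plus.
have G2'l : is_linear G2'.
  move=> a x y; rewrite /G2' (G2_lin Pml PmQ) tl; exact: lin_plus.
have Lw1' : Lset w1' by rewrite /w1' -[_ *: w1]addr0; apply: Lset_l Lw1 Lset0.
have G1'L : forall h, Lset (G1' h) by move=> h; rewrite /G1' addrC; apply: Lset_l Lw1' (G1_L _ _).
have tQ : forall x, t (Q x) = 0.
  by move=> x; rewrite /t (ip_sym axA) eo ?conj0 //; exists x.
have G1'Q : forall x, G1' (Q x) = U (A (R x)) - P (U (A (R x))).
  by move=> x; rewrite /G1' tQ scale0r addr0 (GQ1 PmQx).
have G2'Q : forall x, G2' (Q x) = R x.
  by move=> x; rewrite /G2' tQ scale0r addr0 (GQ2 PmQx).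
have cross : forall h, ipK (G1 Pm h) w1' + ipA (G2 Pm h) w2' = 0.
  move=> h; rewrite /w1' /w2' (ipZr axK) (ipZr axA) (ipNr axA).
  have -> : ipK (G1 Pm h) w1 = g (G2 Pm h) by [].
  rewrite hz; ring.
have G'c : forall h, nK (G1' h) + nA (G2' h) <= nA h.
  move=> h; set X := G1 Pm h; set Y := G2 Pm h; set m := Pm h.
  have mM : MQ m := PmQ h.
  have th : t h = ipA (h - m) e.
    by rewrite (ipBl axA) (ip_sym axA e m) eo // conj0 subr0.
  have ct : nc (t h) <= nA (h - m) * nA e by rewrite th -!n2A; exact: cs axA _ _.
  have gc := G_c' PmQ h; rewrite -/X -/Y -/m in gc.
  have py := proj_pyth axA hpm h; rewrite !n2A -/m in py.
  rewrite /G1' /G2' -/X -/Y -(n2A (Y + _)) (n2D axK) (n2D axA) (n2Z axK) (n2Z axA) !n2A.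
  rewrite (ipZr axK) (ipZr axA).
  have cr : Re (conjc (t h) * ipK X w1') + Re (conjc (t h) * ipA Y w2') = 0.
    by rewrite -ReD -mulrDr cross mulr0.
  have nw1 : nK w1' = s ^+ 2 * nK w1 by rewrite /w1' (n2Z axK) ncR.
  have nw2 : nA w2' = s ^+ 2 * nA z by rewrite /w2' -!n2A (n2Z axA) ncR (n2N axA).
  rewrite nw1 nw2.
  have h1 : nc (t h) * (s ^+ 2 * nK w1) + nc (t h) * (s ^+ 2 * nA z) <= nA (h - m).
    have -> : nc (t h) * (s ^+ 2 * nK w1) + nc (t h) * (s ^+ 2 * nA z) =
      nc (t h) * (s ^+ 2 * (nK w1 + nA z)) by ring.
    have hpos : 0 <= s ^+ 2 * (nK w1 + nA z).
      by apply: mulr_ge0; [exact: sqr_ge0 | have := nA_ge0 z; lra].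
    apply: le_trans (ler_wpM2r hpos ct) _.
    have -> : nA (h - m) * nA e * (s ^+ 2 * (nK w1 + nA z)) = nA (h - m) * (s ^+ 2 * q) by rewrite /q; ring.
    have := nA_ge0 (h - m); nra.
  move: cr h1; set r1 := Re _; set r2 := Re _; lra.
have iB1 := Bg_interp G1'l G2'l G1'L G'c G1'Q G2'Q.
have iB0 := exists_interp Pml PmQ PmQx Pmc.
have e01 : Bg G1' G2' e = Bg (G1 Pm) (G2 Pm) e by rewrite (uB _ iB1) (uB _ iB0).
move/addrI: e01 => e01.
have Pme : Pm e = 0.
  rewrite /e (linB Pml) (proj_id axA M0 Ml hpm (PmQ h0)) subrr //.
have Gxe : Gx Pm e = 0 by rewrite /Gx Pme -(lin0 Q_lin) QinvK.
have G2e : G2 Pm e = 0 by rewrite /G2 Gxe (lin0 R_lin).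
have G1e : G1 Pm e = 0.
  by rewrite /G1 Gxe (lin0 R_lin) (lin0 A_lin) (lin0 U_linear) P0 subrr.
have E0e : Eg (G1 Pm) (G2 Pm) e = 0.
  rewrite (E_rec (G1_L Pm) (G_c PmQ Pmc)) G1e G2e.
  rewrite (lin0 (E_lin (G1_lin Pml PmQ) (G2_lin Pml PmQ) (G1_L Pm) (G_c PmQ Pmc))).
  by rewrite (lin0 U_linear) addr0.
rewrite E0e in e01.
have := congr1 (fun v => ipK v w1) e01.
have G1'e : G1' e = t e *: w1' by rewrite /G1' G1e add0r.
rewrite (E_rec G1'L G'c) G1'e (ip0l axK) (ipDl axK) (ipZl axK).
rewrite (ip_sym axK w1 (U _)) (Lw1.2 _ (PE G1'L G'c _)) conj0 addr0.
rewrite /w1' (ipZl axK) (ipxx axK) /t (ipxx axA) n2A => /eqP.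
rewrite !mulf_eq0 !(inj_eq (@complexI _)) !gt_eqF //. Qed.

End Main.

Unset Implicit Arguments.
Unset Strict Implicit.

Theorem corollary3p1 (F : realType) (H0 H K : hilbertSpace F)
    (H' : K -> Prop) (P : K -> K) (A : H -> K) (T U : K -> K) (R Q : H0 -> H) :
  (* the data set {A, T', U', R, Q} *)
  closed_subspace H' ->
  orth_proj H' P ->
  contraction A -> (forall h, H' (A h)) ->
  contraction_on H' T ->
  minimal_isometric_lifting H' P T U ->
  bounded_op R -> bounded_op Q ->
  (forall x, T (A (R x)) = A (Q x)) ->
  op_le_sq R Q ->
  (* extra hypotheses *)
  strict_contraction A ->
  left_invertible R ->
  ((exists B, contractive_interpolant P A U R Q B /\
       forall B', contractive_interpolant P A U R Q B' -> B' = B)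
   <-> ((forall h, hclosure (fun y => exists x, y = Q x) h) \/ isometry_on H' T)).
Proof.
move=> hH' hP hA hAH hT hU hR hQ hTAR hRQ hAs hRi; split.
- move=> ex; case: (pselect (forall h, hclosure (fun y => exists x, y = Q x) h)) => [dn|nd].
    by left.
  case: (pselect (isometry_on H' T)) => [iso|ni]; first by right.
  case: (nonuniq hH' hP hA hAH hT hU hR hQ hTAR hRQ hAs hRi nd ni ex).
- case=> [dn|iso]; first exact: (dense_case hH' hP hA hAH hT hU hR hQ hTAR hRQ hRi dn).
  exact: (iso_case hH' hP hA hAH hU hTAR iso).
Qed.
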